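(* Let $(X,\le,\to,\rightsquigarrow,d,u)$ be a weakly involutive unital quantum B-algebra and let $(\exists,\forall)$ be a pair of strong synchronized maps on $X$ such that $\exists$ is a weak existential quantifier (equivalently, $\forall$ is a weak universal quantifier). Then for all $x,y\in X$, and with each identity holding also when $\to$ is replaced by $\rightsquigarrow$ throughout: (1) $\exists(\forall x\to y)=\forall x\to\exists y$; (2) $\exists(x\to\forall y)=\forall x\to\forall y$; (3) $\exists(\exists x\to y)=\exists x\to\exists y$; (4) $\forall(\exists x\to y)=\exists x\to\forall y$; (5) $\forall(x\to\exists y)=\exists x\to\exists y$; (6) $\forall(\forall x\to y)=\forall x\to\forall y$; (7) $\forall(x\to\forall y)=\exists x\to\forall y$.
   Context: A quantum B-algebra is a partially ordered set $(X,\le)$ with two binary operations $\to$ and $\rightsquigarrow$ such that for all $x,y,z\in X$: $y\to z\le (x\to y)\to(x\to z)$; $y\rightsquigarrow z\le (x\rightsquigarrow y)\to(x\rightsquigarrow z)$; $y\le z$ implies $x\to y\le x\to z$; and $x\le y\to z$ iff $y\le x\rightsquigarrow z$. It is unital if there is $u\in X$ with $u\to x=u\rightsquigarrow x=x$ for all $x$. A pointed quantum B-algebra has a fixed $d\in X$; write $x^{-}=x\to d$, $x^{\sim}=x\rightsquigarrow d$; it is weakly involutive if $(x^{-})^{\sim}=(x^{\sim})^{-}=x$ for all $x$. In a weakly involutive quantum B-algebra define $x\odot y=(x\to y^{-})^{\sim}$ $(=(y\rightsquigarrow x^{\sim})^{-})$ and $x\oplus y=y^{\sim}\to x$ $(=x^{-}\rightsquigarrow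 y)$. A map $\tau:X\to X$ is good if $(\tau(x^{-}))^{\sim}=(\tau(x^{\sim}))^{-}$ for all $x$; good maps $\tau,\sigma$ are synchronized if $\sigma(x)=(\tau(x^{-}))^{\sim}=(\tau(x^{\sim}))^{-}$ for all $x$; they are strong synchronized if moreover $\tau\circ\sigma=\sigma$ (which for synchronized maps is equivalent to $\sigma\circ\tau=\tau$). A good map $\exists$ is a weak existential quantifier if for all $x,y$: $\exists d=d$; $\exists u=u$; $x\le\exists x$; $\exists(x\oplus\exists y)=\exists(\exists x\oplus y)=\exists x\oplus\exists y$; $\exists(x\oplus x)=\exists x\oplus\exists x$; $\exists(x\odot\exists y)=\exists(\exists x\odot y)=\exists x\odot\exists y$. A good map $\forall$ is a weak universal quantifier if for all $x,y$: $\forall u=u$; $\forall d=d$; $\forall x\le x$; $\forall(x\odot\forall y)=\forall(\forall x\odot y)=\forall x\odot\forall y$; $\forall(x\odot x)=\forall x\odot\forall x$; $\forall(x\oplus\forall y)=\forall(\forall x\oplus y)=\forall x\oplus\forall y$. *)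

(* Defs.v *)
Set Implicit Arguments.

Section QBA.
Variable X : Type.
Variable le : X -> X -> Prop.
Variables (imp1 imp2 : X -> X -> X).   (* imp1 = ->, imp2 = ~> *)
Variables (d u : X).

Definition is_partial_order : Prop :=
  (forall x, le x x) /\
  (forall x y, le x y -> le y x -> x = y) /\
  (forall x y z, le x y -> le y z -> le x z).

Definition is_quantum_B_algebra : Prop :=
  is_partial_order /\
  (forall x y z, le (imp1 y z) (imp1 (imp1 x y) (imp1 x z))) /\
  (forall x y z, le (imp2 y z) (imp2 (imp2 x y) (imp2 x z))) /\
  (forall x y z, le y z -> le (imp1 x y) (imp1 x z)) /\
  (forall x y z, le x (imp1 y z) <-> le y (imp2 x z)).

Definition is_unit : Prop := forall x, imp1 u x = x /\ imp2 u x = x.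

Definition neg1 (x : X) : X := imp1 x d.
Definition neg2 (x : X) : X := imp2 x d.

Definition weakly_involutive : Prop :=
  forall x, neg2 (neg1 x) = x /\ neg1 (neg2 x) = x.

Definition odot (x y : X) : X := neg2 (imp1 x (neg1 y)).
Definition oplus (x y : X) : X := imp1 (neg2 y) x.

Definition good (t : X -> X) : Prop :=
  forall x, neg2 (t (neg1 x)) = neg1 (t (neg2 x)).

Definition synchronized (t s : X -> X) : Prop :=
  good t /\ good s /\
  forall x, s x = neg2 (t (neg1 x)) /\ s x = neg1 (t (neg2 x)).

Definition strong_synchronized (t s : X -> X) : Prop :=
  synchronized t s /\ forall x, t (s x) = s x.

Definition weak_existential_quantifier (E : X -> X) : Prop :=
  good E /\
  E d = d /\ E u = u /\
  (forall x, le x (E x)) /\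
  (forall x y, E (oplus x (E y)) = oplus (E x) (E y) /\
               E (oplus (E x) y) = oplus (E x) (E y)) /\
  (forall x, E (oplus x x) = oplus (E x) (E x)) /\
  (forall x y, E (odot x (E y)) = odot (E x) (E y) /\
               E (odot (E x) y) = odot (E x) (E y)).

Definition weak_universal_quantifier (A : X -> X) : Prop :=
  good A /\
  A u = u /\ A d = d /\
  (forall x, le (A x) x) /\
  (forall x y, A (odot x (A y)) = odot (A x) (A y) /\
               A (odot (A x) y) = odot (A x) (A y)) /\
  (forall x, A (odot x x) = odot (A x) (A x)) /\
  (forall x y, A (oplus x (A y)) = oplus (A x) (A y) /\
               A (oplus (A x) y) = oplus (A x) (A y)).

Definition prop511_identities (imp : X -> X -> X) (E A : X -> X) : Prop :=
  forall x y,
    E (imp (A x) y) = imp (A x) (E y) /\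
    E (imp x (A y)) = imp (A x) (A y) /\
    E (imp (E x) y) = imp (E x) (E y) /\
    A (imp (E x) y) = imp (E x) (A y) /\
    A (imp x (E y)) = imp (E x) (E y) /\
    A (imp (A x) y) = imp (A x) (A y) /\
    A (imp x (A y)) = imp (E x) (A y).
End QBA.

(* Main.v *)
Require Import Defs.
From Stdlib Require Import Setoid.

Theorem proposition5p11 (X : Type) (le : X -> X -> Prop) (imp1 imp2 : X -> X -> X)
  (d u : X) (E A : X -> X)
  (hQ : is_quantum_B_algebra le imp1 imp2)
  (hU : is_unit imp1 imp2 u)
  (hW : weakly_involutive imp1 imp2 d)
  (hS : strong_synchronized imp1 imp2 d E A)
  (hE : weak_existential_quantifier le imp1 imp2 d u E) :
  prop511_identities imp1 E A /\ prop511_identities imp2 E A.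
Proof.
  destruct hQ as [[Hr [Ha Ht]] [H1 [H2 [Hm Hadj]]]].
  destruct hS as [[_ [_ Hsy]] HEA].
  destruct hE as [_ [Ed [_ [_ [Eop [_ Eod]]]]]].
  unfold weakly_involutive, neg1, neg2 in hW.
  unfold oplus, odot, neg1, neg2 in Eop, Eod.
  assert (i1 : forall x, imp2 (imp1 x d) d = x) by (intro x; apply hW).
  assert (i2 : forall x, imp1 (imp2 x d) d = x) by (intro x; apply hW).
  assert (sy1 : forall x, A x = imp2 (E (imp1 x d)) d) by (intro x; apply Hsy).
  assert (sy2 : forall x, A x = imp1 (E (imp2 x d)) d) by (intro x; apply Hsy).
  assert (swap : forall x y z, imp1 x (imp2 y z) = imp2 y (imp1 x z)).
  { intros x y z. apply Ha.
    - apply Hadj. apply Ht with (imp1 (imp2 y z) z).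
      + apply Hadj. apply Hr.
      + apply H1.
    - apply Hadj. apply Ht with (imp2 (imp1 x z) z).
      + apply Hadj. apply Hr.
      + apply H2. }
  assert (contra : forall a b, imp2 a b = imp1 (imp2 b d) (imp2 a d)).
  { intros a b. rewrite <- (i2 a) at 1. rewrite <- (i2 b) at 1.
    rewrite <- swap. rewrite i1. reflexivity. }
  assert (Eid : forall y, E (E y) = E y).
  { intro y. pose proof (proj1 (Eop d y)) as H. rewrite i2, Ed, i2 in H. exact H. }
  assert (F1 : forall z, E (imp1 (E z) d) = imp1 (E z) d).
  { intro z. pose proof (HEA (imp1 z d)) as H. rewrite sy2, i1 in H. exact H. }
  assert (F2 : forall z, E (imp2 (E z) d) = imp2 (E z) d).
  { intro z. pose proof (HEA (imp2 z d)) as H. rewrite sy1, i2 in H. exact H. }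
  assert (L1 : forall a b, E (imp1 a d) = imp1 a d -> E (imp1 a b) = imp1 a (E b)).
  { intros a b Hf. pose proof (proj1 (Eop b (imp1 a d))) as H.
    rewrite Hf, i1 in H. exact H. }
  assert (L2 : forall a b, E b = b -> E (imp1 a b) = imp1 (imp2 (E (imp1 a d)) d) b).
  { intros a b Hf. pose proof (proj2 (Eop b (imp1 a d))) as H.
    rewrite Hf, i1 in H. exact H. }
  assert (L3 : forall a b, E a = a -> A (imp1 a b) = imp1 a (A b)).
  { intros a b Hf. rewrite sy2. pose proof (proj2 (Eod a (imp2 b d))) as H.
    rewrite Hf, i2 in H. rewrite H, i2, sy2. reflexivity. }
  assert (L4 : forall a b, E (imp2 b d) = imp2 b d -> A (imp1 a b) = imp1 (E a) b).
  { intros a b Hf. rewrite sy2. pose proof (proj1 (Eod a (imp2 b d))) as H.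
    rewrite Hf, i2 in H. rewrite H, i2. reflexivity. }
  assert (FA : forall x, E (A x) = A x) by exact HEA.
  assert (An : forall x, imp1 (A x) d = E (imp1 x d)).
  { intro x. rewrite sy1, i2. reflexivity. }
  assert (At : forall x, imp2 (A x) d = E (imp2 x d)).
  { intro x. rewrite sy2, i1. reflexivity. }
  assert (Ah : forall x, A (imp2 x d) = imp2 (E x) d).
  { intro x. rewrite sy1, i2. reflexivity. }
  split; intros x y.
  - repeat split.
    + apply L1. rewrite An, Eid. reflexivity.
    + rewrite L2 by apply FA. rewrite <- sy1. reflexivity.
    + apply L1. apply F1.
    + apply L3. apply Eid.
    + apply L4. apply F2.
    + apply L3. apply FA.
    + apply L4. rewrite At, Eid. reflexivity.
  - repeat split.
    + rewrite (contra (A x) y), (contra (A x) (E y)).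
      rewrite L2 by (rewrite At; apply Eid). rewrite ?i1, ?i2, ?At, ?An, ?Ah; try reflexivity.
    + rewrite (contra x (A y)), (contra (A x) (A y)).
      rewrite L1 by (rewrite i2; apply FA). rewrite ?i1, ?i2, ?At, ?An, ?Ah; try reflexivity.
    + rewrite (contra (E x) y), (contra (E x) (E y)).
      rewrite L2 by apply F2. rewrite ?i1, ?i2, ?At, ?An, ?Ah; try reflexivity.
    + rewrite (contra (E x) y), (contra (E x) (A y)).
      rewrite L4 by (rewrite <- (F2 x); apply F2). rewrite ?i1, ?i2, ?At, ?An, ?Ah; try reflexivity.
    + rewrite (contra x (E y)), (contra (E x) (E y)).
      rewrite L3 by apply F2. rewrite ?i1, ?i2, ?At, ?An, ?Ah; try reflexivity.
    + rewrite (contra (A x) y), (contra (A x) (A y)).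
      rewrite L4 by (rewrite At; apply F2). rewrite ?i1, ?i2, ?At, ?An, ?Ah; try reflexivity.
    + rewrite (contra x (A y)), (contra (E x) (A y)).
      rewrite L3 by (rewrite At; apply Eid). rewrite ?i1, ?i2, ?At, ?An, ?Ah; try reflexivity.
Qed.
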